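(* For every integer $s\geq 0$, as formal power series in $t$, $$\sum_{n=0}^{\infty} L_{n,s}\,\frac{t^n}{n!} \;=\; \frac{e^{-1+\sqrt{1-2t}}}{\sqrt{1-2t}}\cdot\frac{\bigl(1-\sqrt{1-2t}\bigr)^s}{s!}.$$
   Context: A linear chord diagram with $n$ chords is a partition of $[2n]=\{1,2,\dots,2n\}$ into $n$ blocks of size two, called chords (equivalently, a perfect matching of $[2n]$). For a chord $\{a,b\}$ with $a<b$, its length is $b-a$. A short chord is a chord of length one, i.e. a chord of the form $\{i,i+1\}$. For $n\ge 0$ and $0\le s\le n$, $L_{n,s}$ denotes the number of linear chord diagrams with $n$ chords having exactly $s$ short chords (so $L_{0,0}=1$), and $L_{n,s}=0$ for $s>n$. *)

(* Defs.v *)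
From HB Require Import structures.
From mathcomp Require Import all_boot all_order all_algebra.
Set Implicit Arguments. Unset Strict Implicit. Unset Printing Implicit Defensive.
Import Order.TTheory GRing.Theory Num.Theory.

(* A linear chord diagram with n chords = perfect matching of {0,..,2n-1}
   (we use 0-based points, which does not affect lengths), encoded as a
   fixed-point-free involution f : 'I_(2n) -> 'I_(2n) (f x = partner of x). *)
Definition is_chord_diagram (n : nat) (f : {ffun 'I_(n.*2) -> 'I_(n.*2)}) : bool :=
  [forall x, (f (f x) == x) && (f x != x)].

Definition short_chords (n : nat) (f : {ffun 'I_(n.*2) -> 'I_(n.*2)}) : nat :=
  #|[set x : 'I_(n.*2) | val (f x) == (val x).+1]|.

Definition L (n s : nat) : nat :=
  #|[set f : {ffun 'I_(n.*2) -> 'I_(n.*2)} |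
       is_chord_diagram f & short_chords f == s]|.

Local Open Scope ring_scope.

Definition fps := nat -> rat.

Definition fmul (f g : fps) : fps :=
  fun n => \sum_(i < n.+1) f i * g (n - i)%N.
Definition fadd (f g : fps) : fps := fun n => f n + g n.
Definition fscale (c : rat) (f : fps) : fps := fun n => c * f n.
Definition fconst (c : rat) : fps := fun n => if n == 0%N then c else 0.
Definition fX : fps := fun n => if n == 1%N then 1 else 0.
Definition fpow (f : fps) (k : nat) : fps := iter k (fmul f) (fconst 1).

(* composition  sum_k a_k h^k  of the power series with coefficients a
   with a series h having zero constant term (only k <= n contribute to
   the coefficient of t^n). *)
Definition fcomp (a : nat -> rat) (h : fps) : fps :=
  fun n => \sum_(k < n.+1) a k * fpow h k n.

Definition gbinom (x : rat) (k : nat) : rat :=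
  (\prod_(i < k) (x - i%:R)) / (k`!)%:R.

Definition fexp (h : fps) : fps := fcomp (fun k => ((k`!)%:R)^-1) h.

Definition fsqrt1p (h : fps) : fps := fcomp (gbinom (1 / 2%:R)) h.

(* multiplicative inverse of a series f with f_0 <> 0:
   f^{-1} = f_0^{-1} * sum_k (-1)^k (f/f_0 - 1)^k *)
Definition finv (f : fps) : fps :=
  fscale (f 0%N)^-1
    (fcomp (fun k => (-1) ^+ k) (fadd (fscale (f 0%N)^-1 f) (fconst (-1)))).

Definition sqrt1m2t : fps := fsqrt1p (fscale (-2%:R) fX).

Definition rhs (s : nat) : fps :=
  fmul (fmul (fexp (fadd (fconst (-1)) sqrt1m2t)) (finv sqrt1m2t))
       (fscale ((s`!)%:R)^-1 (fpow (fadd (fconst 1) (fscale (-1) sqrt1m2t)) s)).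

Definition egfL (s : nat) : fps := fun n => (L n s)%:R / (n`!)%:R.

(* Main.v *)
Require Import Defs.
From HB Require Import structures.
From mathcomp Require Import all_boot all_order all_algebra.
From mathcomp Require Import boolp.
From mathcomp Require Import zify ring.
From Stdlib Require Import FunctionalExtensionality.
Set Implicit Arguments. Unset Strict Implicit. Unset Printing Implicit Defensive.

Section Comb.
Variable m : nat.

Definition cdm k (f : {ffun 'I_k -> 'I_k}) : bool := [forall x, (f (f x) == x) && (f x != x)].
Definition scm k (f : {ffun 'I_k -> 'I_k}) : nat := \sum_(x : 'I_k) (val (f x) == x.+1 :> nat).

Definition psi (g : {ffun 'I_m -> 'I_m}) (p : 'I_m.+1) : {ffun 'I_m.+2 -> 'I_m.+2} :=
  [ffun x => match unlift ord_max x with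
             | None => lift ord_max p
             | Some y => match unlift p y with
                         | None => ord_max
                         | Some j => lift ord_max (lift p (g j))
                         end
             end].

Lemma psi_max g p : psi g p ord_max = lift ord_max p.
Proof. by rewrite ffunE unlift_none. Qed.
Lemma psi_p g p : psi g p (lift ord_max p) = ord_max.
Proof. by rewrite ffunE liftK unlift_none. Qed.
Lemma psi_j g p j : psi g p (lift ord_max (lift p j)) = lift ord_max (lift p (g j)).
Proof. by rewrite ffunE !liftK. Qed.

Lemma cd_psi g p : cdm g -> cdm (psi g p).
Proof.
move/forallP=> Hg; apply/forallP => x.
case: (unliftP ord_max x) => [y ->|->]; last first.
  by rewrite psi_max psi_p eqxx eq_sym neq_lift.
case: (unliftP p y) => [j ->|->]; last by rewrite psi_p psi_max eqxx neq_lift.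
have /andP[/eqP e1 e2] := Hg j.
by rewrite !psi_j e1 eqxx /= !(inj_eq (@lift_inj _ _)).
Qed.

Definition phip (f : {ffun 'I_m.+2 -> 'I_m.+2}) : 'I_m.+1 :=
  odflt ord0 (unlift ord_max (f ord_max)).
Definition phig (f : {ffun 'I_m.+2 -> 'I_m.+2}) : {ffun 'I_m -> 'I_m} :=
  [ffun j => odflt j (obind (unlift (phip f))
                 (unlift ord_max (f (lift ord_max (lift (phip f) j)))))].

Lemma phip_psi g p : phip (psi g p) = p.
Proof. by rewrite /phip psi_max liftK. Qed.
Lemma phig_psi g p : phig (psi g p) = g.
Proof. by apply/ffunP => j; rewrite ffunE phip_psi psi_j liftK /= liftK. Qed.

Lemma psi_phi f : cdm f -> psi (phig f) (phip f) = f /\ cdm (phig f).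
Proof.
move/forallP=> Hf.
have ff x : f (f x) = x by have /andP[/eqP] := Hf x.
have fn x : f x != x by have /andP[] := Hf x.
have finj : injective f by apply: (can_inj ff).
set p := phip f.
have fmax : f ord_max = lift ord_max p.
  rewrite /p /phip; case: (unliftP ord_max (f ord_max)) => [y ->|e] /=.
    by [].
  by move: (fn ord_max); rewrite e eqxx.
have fp : f (lift ord_max p) = ord_max by rewrite -fmax ff.
have fj j : f (lift ord_max (lift p j)) = lift ord_max (lift p (phig f j)).
  rewrite ffunE -/p.
  case: (unliftP ord_max (f (lift ord_max (lift p j)))) => [y ey|ey].
    rewrite ey /=; case: (unliftP p y) => [k ->|ey2] /=; first by [].
    move: ey; rewrite ey2 -fmax => /finj /eqP.
    by rewrite eq_sym (negbTE (neq_lift _ _)).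
  have := finj _ _ (etrans ey (esym fp)) => /(@lift_inj _ ord_max) /eqP.
  by rewrite eq_sym (negbTE (neq_lift _ _)).
split.
  apply/ffunP => x.
  case: (unliftP ord_max x) => [y ->|->]; last by rewrite psi_max fmax.
  case: (unliftP p y) => [j ->|->]; last by rewrite psi_p fp.
  by rewrite psi_j fj.
apply/forallP => j; apply/andP; split.
  by apply/eqP; apply: (@lift_inj _ p); apply: (@lift_inj _ ord_max); rewrite -!fj ff.
apply/eqP => e; move: (fn (lift ord_max (lift p j))).
by rewrite fj e eqxx.
Qed.


Definition sp (g : {ffun 'I_m -> 'I_m}) (p : 'I_m.+1) : nat :=
  \sum_(j : 'I_m) ((val (g j) == j.+1) && (j.+1 == p :> nat)).

Lemma bump_short (P G J : nat) :
  (bump P G == (bump P J).+1) = (G == J.+1) && (J.+1 != P).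
Proof.
rewrite /bump; case: leqP => h1; case: leqP => h2;
  case: (G =P J.+1) => e1; case: (J.+1 =P P) => e2 /=;
  first [apply/eqP; lia | apply/negbTE/eqP; lia].
Qed.

Lemma widen_lift (i : 'I_m.+1) : widen_ord (leqnSn m.+1) i = lift ord_max i.
Proof. by apply: val_inj => /=; rewrite /bump leqNgt ltn_ord. Qed.

Lemma sc_psi g p : scm (psi g p) + sp g p = (p == ord_max :> 'I_m.+1) + scm g.
Proof.
rewrite /scm big_ord_recr /=.
under eq_bigr => i _ do rewrite widen_lift.
rewrite (bigD1_ord p) //= psi_max psi_p.
under eq_bigr => i _ do rewrite psi_j lift_max /= bump_short.
rewrite lift_max (@ltn_eqF p m.+2 (ltnW (ltn_ord p))) addn0.
have -> : ((ord_max : 'I_m.+2) == p.+1 :> nat) = (p == ord_max).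
  by rewrite /= eqSS eq_sym.
rewrite -addnA /sp -big_split /=; congr (_ + _); apply: eq_bigr => i _.
by case: (g i == i.+1 :> nat); case: (i.+1 == p :> nat).
Qed.


Lemma sum_pick (j0 : 'I_m) (F : 'I_m -> bool) :
  \sum_(j : 'I_m) ((F j && (j == j0)) : nat) = F j0.
Proof.
rewrite (bigD1 j0) //= eqxx andbT big1 ?addn0 // => j /negbTE ->.
by rewrite andbF.
Qed.

Lemma sp_max g : sp g ord_max = 0.
Proof.
rewrite /sp big1 // => j _; apply/eqP; rewrite eqb0; apply/negP => /andP[/eqP e1 /eqP e2].
by have := ltn_ord (g j); rewrite e1 /= e2 ltnn.
Qed.

Lemma sp_le1 g p : sp g p <= 1.
Proof.
rewrite /sp; case: p => [[|k] Hk] /=.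
  by rewrite big1 // => j _; rewrite andbF.
have Hk' : k < m by [].
rewrite (eq_bigr (fun j => ((val (g j) == j.+1) && (j == Ordinal Hk')) : nat)).
  by rewrite sum_pick; case: (_ == _).
by move=> j _; rewrite eqSS.
Qed.

Lemma sum_sp g : \sum_(q : 'I_m) sp g (lift ord_max q) = scm g.
Proof.
rewrite /sp exchange_big /scm; apply: eq_bigr => j _.
have [Aj|nAj] := boolP (val (g j) == j.+1); last first.
  by rewrite big1 // => q _; rewrite (negbTE nAj).
have Hq : j.+1 < m by rewrite -(eqP Aj) ltn_ord.
rewrite (eq_bigr (fun q => ((true && (q == Ordinal Hq)) : nat))).
  by rewrite sum_pick.
by move=> q _; rewrite lift_max eq_sym.
Qed.

Lemma aux_count x y r s : x + y = r -> y <= 1 ->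
  (x == s) + y * (r == s) = y * (r == s.+1) + (r == s).
Proof.
move=> <-; case: y => [|[|//]] _.
  by rewrite !addn0 mul0n add0n.
by rewrite !mul1n addn1 eqSS addnC.
Qed.

Lemma scm_le (g : {ffun 'I_m -> 'I_m}) : scm g <= m.
Proof.
rewrite /scm -[X in _ <= X]card_ord -sum1_card.
by apply: leq_sum => i _; case: (_ == _).
Qed.

Lemma count_g (g : {ffun 'I_m -> 'I_m}) s :
  \sum_(p : 'I_m.+1) (scm (psi g p) == s) + s * (scm g == s) =
  ((scm g).+1 == s) + scm g * (scm g == s.+1) + m * (scm g == s).
Proof.
have wl (q : 'I_m) : widen_ord (leqnSn m) q = lift ord_max q.
  by apply: val_inj => /=; rewrite /bump leqNgt ltn_ord.
set r := scm g.
rewrite big_ord_recr /=.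
have Hmax : scm (psi g ord_max) = r.+1.
  by have := sc_psi g ord_max; rewrite sp_max eqxx addn0 add1n.
rewrite Hmax.
have Hq (q : 'I_m) : (scm (psi g (lift ord_max q)) == s) + sp g (lift ord_max q) * (r == s)
          = sp g (lift ord_max q) * (r == s.+1) + (r == s).
  apply: aux_count; last exact: sp_le1.
  have := sc_psi g (lift ord_max q).
  by rewrite eq_sym (negbTE (neq_lift _ _)) add0n.
have Hsum : \sum_(q < m) ((scm (psi g (lift ord_max q)) == s) + sp g (lift ord_max q) * (r == s))
  = \sum_(q < m) (sp g (lift ord_max q) * (r == s.+1) + (r == s)).
  by apply: eq_bigr => q _; exact: Hq.
rewrite big_split big_split /= -big_distrl -big_distrl /= sum_sp sum_nat_const card_ord in Hsum.
under eq_bigr => q _ do rewrite wl.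
have hs : s * (r == s) = r * (r == s) by case: eqP => [->|]; rewrite ?muln0.
move: Hsum; rewrite hs.
set X := \sum_(q < m) _; set A := r * _; set B := r * _; set C := m * _.
lia.
Qed.


Definition cnt k s : nat := \sum_(f : {ffun 'I_k -> 'I_k}) (cdm f && (scm f == s)).

Lemma cnt_psi s : cnt m.+2 s =
  \sum_(g : {ffun 'I_m -> 'I_m}) (cdm g * \sum_(p : 'I_m.+1) (scm (psi g p) == s)).
Proof.
rewrite /cnt.
transitivity (\sum_(f in [set f : {ffun 'I_m.+2 -> 'I_m.+2} | cdm f]) ((scm f == s) : nat)).
  by rewrite [RHS]big_mkcond /=; apply: eq_bigr => f _; rewrite inE; case: cdm.
have -> : [set f : {ffun 'I_m.+2 -> 'I_m.+2} | cdm f] =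
    (fun q => psi q.1 q.2) @: [set q : {ffun 'I_m -> 'I_m} * 'I_m.+1 | cdm q.1].
  apply/setP => f; rewrite inE; apply/idP/imsetP.
    move=> cf; have [e c] := psi_phi cf.
    by exists (phig f, phip f); rewrite ?inE // e.
  by case=> -[g p]; rewrite inE /= => cg ->; exact: cd_psi.
rewrite big_imset /=; last first.
  move=> [g p] [g' p'] _ _ /= e.
  by have := congr1 phig e; have := congr1 phip e; rewrite !phig_psi !phip_psi => -> ->.
transitivity (\sum_(q : {ffun 'I_m -> 'I_m} * 'I_m.+1)
                (if cdm q.1 then ((scm (psi q.1 q.2) == s) : nat) else 0)).
  by rewrite big_mkcond; apply: eq_bigr => q _; rewrite inE.
rewrite -(pair_big xpredT xpredT (fun g p => if cdm g then ((scm (psi g p) == s) : nat) else 0)) /=.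
apply: eq_bigr => g _; case: (cdm g); rewrite ?mul1n ?mul0n //.
by rewrite big1.
Qed.

Lemma cnt_rec s : cnt m.+2 s + s * cnt m s =
  \sum_(g : {ffun 'I_m -> 'I_m}) (cdm g && ((scm g).+1 == s)) + s.+1 * cnt m s.+1 + m * cnt m s.
Proof.
rewrite cnt_psi /cnt !big_distrr -!big_split /=; apply: eq_bigr => g _.
case: (cdm g) => /=; last by rewrite !muln0 mul0n.
rewrite mul1n count_g; congr (_ + _ + _).
by case: eqP => [->|]; rewrite ?muln0.
Qed.

End Comb.

Lemma card_sum (T : finType) (P : pred T) : #|[set x | P x]| = \sum_x (P x : nat).
Proof.
rewrite -sum1_card big_mkcond /=; apply: eq_bigr => x _; rewrite inE.
by case: (P x).
Qed.

Lemma L_cnt n s : L n s = cnt n.*2 s.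
Proof.
rewrite /L card_sum /cnt; apply: eq_bigr => f _.
by rewrite /short_chords card_sum.
Qed.

Lemma cnt0 s : cnt 0 s = (s == 0%N).
Proof.
rewrite /cnt (eq_bigr (fun _ => (s == 0%N) : nat)).
  by rewrite sum_nat_const card_ffun !card_ord expn0 mul1n.
move=> f _; have -> : cdm f by apply/forallP => -[].
by rewrite /= /scm big_ord0 eq_sym.
Qed.

Lemma L_rec n s : (L n.+1 s + s * L n s =
  (if s is t.+1 then L n t else 0) + s.+1 * L n s.+1 + n.*2 * L n s)%N.
Proof.
rewrite !L_cnt doubleS cnt_rec; congr (_ + _ + _)%N.
case: s => [|t]; first by rewrite big1 // => g _; rewrite andbF.
by rewrite L_cnt /cnt; apply: eq_bigr => g _; rewrite eqSS.
Qed.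



Import Order.TTheory GRing.Theory Num.Theory.
Local Open Scope ring_scope.

Definition F : Type := nat -> rat.
HB.instance Definition _ := gen_eqMixin F.
HB.instance Definition _ := gen_choiceMixin F.

Definition fz : F := fun _ => 0.
Definition fo (f : F) : F := fun n => - f n.
Definition fa (f g : F) : F := fun n => f n + g n.

Lemma faA : associative fa.
Proof. move=> f g h; apply: functional_extensionality => n; exact: addrA. Qed.
Lemma faC : commutative fa.
Proof. move=> f g; apply: functional_extensionality => n; exact: addrC. Qed.
Lemma fa0 : left_id fz fa.
Proof. move=> f; apply: functional_extensionality => n; exact: add0r. Qed.
Lemma faN : left_inverse fz fo fa.
Proof. move=> f; apply: functional_extensionality => n; exact: addNr. Qed.

HB.instance Definition _ := GRing.isZmodule.Build F faA faC fa0 faN.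

Definition tr (N : nat) (f : F) : {poly rat} := \poly_(i < N) f i.

Lemma coefM_low (p p' q q' : {poly rat}) n :
  (forall k, (k <= n)%N -> p`_k = p'`_k) -> (forall k, (k <= n)%N -> q`_k = q'`_k) ->
  (p * q)`_n = (p' * q')`_n.
Proof.
move=> Hp Hq; rewrite !coefM; apply: eq_bigr => i _.
by rewrite Hp ?Hq ?leq_subr // -ltnS.
Qed.

Lemma fmul_low (f g : F) n (p q : {poly rat}) :
  (forall k, (k <= n)%N -> p`_k = f k) -> (forall k, (k <= n)%N -> q`_k = g k) ->
  fmul f g n = (p * q)`_n.
Proof.
move=> Hp Hq; rewrite coefM /fmul; apply: eq_bigr => i _.
by rewrite Hp ?Hq ?leq_subr // -ltnS.
Qed.

Lemma fmul_tr (f g : F) n : fmul f g n = (tr n.+1 f * tr n.+1 g)`_n.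
Proof. by apply: fmul_low => k kn; rewrite coef_poly ltnS kn. Qed.

Lemma tr_fmul N (f g : F) k : (k < N)%N -> (tr N (fmul f g))`_k = (tr N f * tr N g)`_k.
Proof.
move=> kN; rewrite coef_poly kN; apply: fmul_low => j jk;
by rewrite coef_poly (leq_ltn_trans jk kN).
Qed.

Definition fm (f g : F) : F := fmul f g.
Definition f1 : F := fconst 1.

Lemma fmA : associative fm.
Proof.
move=> f g h; apply: functional_extensionality => n; rewrite /fm !fmul_tr.
transitivity ((tr n.+1 f * (tr n.+1 g * tr n.+1 h))`_n).
  by apply: coefM_low => // k kn; rewrite tr_fmul.
by rewrite mulrA; apply: coefM_low => // k kn; rewrite tr_fmul.
Qed.

Lemma fmC : commutative fm.
Proof. by move=> f g; apply: functional_extensionality => n; rewrite /fm !fmul_tr mulrC. Qed.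

Lemma fconstM_l c (f : F) n : fmul (fconst c) f n = c * f n.
Proof.
rewrite (@fmul_low _ _ _ (c%:P) (tr n.+1 f)); first by rewrite coefCM coef_poly ltnS leqnn.
  by move=> k _; rewrite coefC.
by move=> k kn; rewrite coef_poly ltnS kn.
Qed.

Lemma fm1 : left_id f1 fm.
Proof. by move=> f; apply: functional_extensionality => n; rewrite /fm fconstM_l mul1r. Qed.

Lemma fmDl : left_distributive fm fa.
Proof.
move=> f g h; apply: functional_extensionality => n.
rewrite /fm /fmul /fa -big_split; apply: eq_bigr => i _; exact: mulrDl.
Qed.

Lemma f1_neq0 : f1 != fz.
Proof.
apply/eqP => H; have := congr1 (fun f : F => f 0%N) H.
by rewrite /f1 /fconst /fz /= => /eqP; rewrite oner_eq0.
Qed.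

HB.instance Definition _ := GRing.Zmodule_isComNzRing.Build F fmA fmC fm1 fmDl f1_neq0.

Lemma mulE (f g : F) n : (f * g) n = fmul f g n. Proof. by []. Qed.
Lemma addE (f g : F) n : (f + g) n = f n + g n. Proof. by []. Qed.
Lemma oppE (f : F) n : (- f) n = - f n. Proof. by []. Qed.
Lemma oneE n : (1 : F) n = fconst 1 n. Proof. by []. Qed.
Lemma zeroE n : (0 : F) n = 0. Proof. by []. Qed.
Lemma natmulE (f : F) k n : (f *+ k) n = f n *+ k.
Proof. by elim: k => [|k IH]; rewrite ?mulr0n // !mulrS addE IH. Qed.
Lemma fmulE (f g : F) : fmul f g = f * g. Proof. by []. Qed.
Lemma faddE (f g : F) : fadd f g = f + g. Proof. by []. Qed.
Lemma fpowE (f : F) k : fpow f k = f ^+ k.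
Proof. by elim: k => [|k IH] //; rewrite exprS -IH. Qed.
Lemma fconstM (c : rat) (f : F) n : ((fconst c : F) * f) n = c * f n.
Proof. exact: fconstM_l. Qed.
Lemma fscaleE c (f : F) : fscale c f = (fconst c : F) * f.
Proof. by apply: functional_extensionality => n; rewrite fconstM. Qed.
Lemma fconst_mul a b : (fconst a : F) * fconst b = fconst (a * b).
Proof.
apply: functional_extensionality => n; rewrite fconstM /fconst.
by case: (n == 0%N); rewrite ?mulr0.
Qed.
Lemma fconst1 : (fconst 1 : F) = 1. Proof. by []. Qed.
Lemma fconstD a b : fconst (a + b) = (fconst a : F) + fconst b.
Proof.
by apply: functional_extensionality => n; rewrite addE /fconst; case: (n == 0%N); rewrite ?addr0.
Qed.
Lemma fconstN a : fconst (- a) = - (fconst a : F).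
Proof.
by apply: functional_extensionality => n; rewrite oppE /fconst; case: (n == 0%N); rewrite ?oppr0.
Qed.
Lemma mul0E (f g : F) : (f * g) 0%N = f 0%N * g 0%N.
Proof. by rewrite mulE /fmul big_ord_recl big_ord0 addr0. Qed.
Lemma expr0E (f : F) k : (f ^+ k) 0%N = f 0%N ^+ k.
Proof. by elim: k => [|k IH]; rewrite ?expr0 // !exprS mul0E IH. Qed.

Definition D (f : F) : F := fun n => f n.+1 *+ n.+1.

Lemma tr_deriv (f : F) n k : (k <= n)%N -> ((tr n.+2 f)^`())`_k = D f k.
Proof. by move=> kn; rewrite coef_deriv coef_poly ltnS ltnS kn. Qed.

Lemma DM (f g : F) : D (f * g) = D f * g + f * D g.
Proof.
apply: functional_extensionality => n.
rewrite /D addE !mulE fmul_tr -coef_deriv derivM coefD.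
congr (_ + _); symmetry; apply: fmul_low => k kn.
- by rewrite tr_deriv.
- by rewrite coef_poly ltnS (leq_trans kn).
- by rewrite coef_poly ltnS (leq_trans kn).
- by rewrite tr_deriv.
Qed.

Lemma DD (f g : F) : D (f + g) = D f + D g.
Proof. by apply: functional_extensionality => n; rewrite /D !addE mulrnDl. Qed.
Lemma DN (f : F) : D (- f) = - D f.
Proof. by apply: functional_extensionality => n; rewrite /D !oppE mulNrn. Qed.
Lemma Dconst c : D (fconst c) = 0.
Proof. by apply: functional_extensionality => n; rewrite /D /fconst /= mul0rn. Qed.
Lemma D1 : D 1 = 0. Proof. exact: Dconst. Qed.
Lemma DX : D fX = 1.
Proof. by apply: functional_extensionality => -[|n]; rewrite /D /fX /= ?mul0rn. Qed.
Lemma D0 : D 0 = 0.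
Proof. by apply: functional_extensionality => n; rewrite /D zeroE mul0rn. Qed.
Lemma Dnat (f : F) k : D (f *+ k) = D f *+ k.
Proof. by elim: k => [|k IH]; rewrite ?mulr0n ?D0 // !mulrS DD IH. Qed.

Lemma DexpS (f : F) k : D (f ^+ k.+1) = (f ^+ k * D f) *+ k.+1.
Proof.
elim: k => [|k IH]; first by rewrite expr1 expr0 mul1r.
rewrite exprS DM IH mulrnAr mulrA -exprS [D f * _]mulrC -mulrS.
by [].
Qed.
Lemma Dexp (f : F) k : D (f ^+ k) = (f ^+ k.-1 * D f) *+ k.
Proof. by case: k => [|k]; rewrite ?expr0 ?D1 ?mulr0n // DexpS. Qed.

Lemma exp_low (h : F) k n : h 0%N = 0 -> (n < k)%N -> (h ^+ k) n = 0.
Proof.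
move=> h0; elim: k n => [//|k IH] n nk.
rewrite exprS mulE /fmul big1 // => -[[|i] Hi] _ /=; first by rewrite h0 mul0r.
by rewrite IH ?mulr0 //; lia.
Qed.

Lemma fcompE a (h : F) n : fcomp a h n = \sum_(k < n.+1) a k * (h ^+ k) n.
Proof. by apply: eq_bigr => k _; rewrite fpowE. Qed.

Lemma fcomp_ext a (h : F) n N : h 0%N = 0 -> (n < N)%N ->
  fcomp a h n = \sum_(k < N) a k * (h ^+ k) n.
Proof.
move=> h0 nN; rewrite fcompE (big_ord_widen N (fun k => a k * (h ^+ k) n) nN).
rewrite big_mkcond /=; apply: eq_bigr => i _; case: ifP => // /negbT.
by rewrite -leqNgt => ni; rewrite exp_low ?mulr0.
Qed.

Lemma fcompM a (h g : F) n : h 0%N = 0 ->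
  ((fcomp a h : F) * g) n = \sum_(k < n.+1) a k * (h ^+ k * g) n.
Proof.
move=> h0; rewrite mulE /fmul.
under eq_bigr => i _ do rewrite (fcomp_ext a h0 (ltn_ord i)) big_distrl.
rewrite exchange_big; apply: eq_bigr => k _; rewrite mulE /fmul big_distrr.
by apply: eq_bigr => i _; exact: (esym (mulrA _ _ _)).
Qed.

Lemma fcomp0 a (h : F) : fcomp a h 0%N = a 0%N.
Proof. by rewrite fcompE big_ord_recl big_ord0 addr0 expr0 oneE /fconst /= mulr1. Qed.

Lemma Dfcomp a (h : F) : h 0%N = 0 ->
  D (fcomp a h) = (fcomp (fun k => a k.+1 *+ k.+1) h : F) * D h.
Proof.
move=> h0; apply: functional_extensionality => n.
rewrite fcompM // /D (fcomp_ext a h0 (ltnSn n.+1)) -sumrMnl.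
rewrite big_ord_recl expr0 oneE /fconst /= mulr0 mul0rn add0r.
apply: eq_bigr => k _.
have E : (h ^+ k.+1) n.+1 *+ n.+1 = (h ^+ k * D h) n *+ k.+1.
  by rewrite -[RHS]natmulE -DexpS.
by rewrite (_ : bump 0 k = k.+1) // -mulrnAr E mulrnAr mulrnAl.
Qed.

Lemma fcomp_alt (g : F) : g 0%N = 0 ->
  (1 + g) * (fcomp (fun k => (-1) ^+ k) g : F) = 1.
Proof.
move=> g0; apply: functional_extensionality => n.
rewrite mulrDl mul1r addE [g * _]mulrC fcompM // fcompE -big_split /=.
pose u k := - ((-1) ^+ k * (g ^+ k) n).
transitivity (\sum_(0 <= k < n.+1) (u k.+1 - u k)).
  rewrite big_mkord; apply: eq_bigr => k _; rewrite /u exprS exprSr; ring.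
rewrite telescope_sumr //.
by rewrite /u exp_low // expr0 !mulr0 oppr0 sub0r opprK mul1r.
Qed.

Lemma finvK (f : F) : f 0%N != 0 -> f * (Defs.finv f : F) = 1.
Proof.
move=> f0; set c := (f 0%N)^-1.
set g : F := fadd (fscale c f) (fconst (-1)).
have g0 : g 0%N = 0 by rewrite /g /fadd /fscale /fconst /= mulVf.
have Ef : f = (fconst (f 0%N) : F) * (1 + g).
  rewrite /g faddE fscaleE fconstN addrCA subrr addr0 mulrA fconst_mul.
  by rewrite /c mulfV // fconst1; exact: (esym (mul1r f)).
rewrite /Defs.finv fscaleE -/c -/g {1}Ef mulrCA -mulrA mulrA fconst_mul.
rewrite mulrC /c mulVf // fconst1 mulr1; exact: fcomp_alt.
Qed.

Definition Sq : F := sqrt1m2t.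
Definition Iv : F := Defs.finv sqrt1m2t.
Definition Y : F := 1 - 2%:R * (fX : F).

Lemma gb0 x : gbinom x 0 = 1.
Proof. by rewrite /gbinom big_ord0 fact0 divr1. Qed.

Lemma gbS x k : gbinom x k.+1 = gbinom x k * (x - k%:R) / k.+1%:R.
Proof.
rewrite /gbinom big_ord_recr /= factS natrM.
have h1 : (k`!)%:R != 0 :> rat by rewrite pnatr_eq0 -lt0n fact_gt0.
have h2 : (k.+1)%:R != 0 :> rat by rewrite pnatr_eq0.
by field; rewrite h1 addrC natr1 h2.
Qed.

Lemma fXM (g : F) n : ((fX : F) * g) n = if n is n'.+1 then g n' else 0.
Proof.
rewrite mulE (@fmul_low _ _ _ 'X (tr n.+1 g)).
  by rewrite coefXM; case: n => [|n] //=; rewrite coef_poly ltnS leqnSn.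
  by move=> k _; rewrite coefX /fX; case: (k == 1%N).
by move=> k kn; rewrite coef_poly ltnS kn.
Qed.

Lemma fXexp k n : ((fX : F) ^+ k) n = (n == k)%:R.
Proof.
elim: k n => [|k IH] n; first by rewrite expr0 oneE /fconst; case: (n == 0%N).
by rewrite exprS fXM; case: n => [|n] //; rewrite IH eqSS.
Qed.

Lemma fconstX c k : (fconst c : F) ^+ k = fconst (c ^+ k).
Proof. by elim: k => [|k IH]; rewrite ?expr0 // !exprS IH fconst_mul. Qed.

Lemma Scoef n : Sq n = gbinom (1 / 2%:R) n * (- 2%:R) ^+ n.
Proof.
rewrite /Sq /sqrt1m2t /fsqrt1p fcompE fscaleE.
under eq_bigr => k _ do rewrite exprMn fconstX fconstM fXexp.
rewrite big_ord_recr /= eqxx mulr1 big1 ?add0r // => k _.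
by rewrite eq_sym (ltn_eqF (ltn_ord k)) mulr0 mulr0.
Qed.

Lemma S0 : Sq 0%N = 1.
Proof. by rewrite Scoef gb0 expr0 mulr1. Qed.

Lemma Ymul (G : F) n : (Y * G) n = G n - 2%:R * (if n is n'.+1 then G n' else 0).
Proof.
rewrite /Y mulrBl mul1r addE oppE -mulrA.
have -> : (2%:R : F) = fconst 2%:R.
  by apply: functional_extensionality => k; rewrite natmulE oneE /fconst; case: (k == 0%N); rewrite ?mul0rn.
by rewrite fconstM fXM.
Qed.

Lemma DS_eq : Y * D Sq = - Sq.
Proof.
apply: functional_extensionality => n; rewrite Ymul oppE /D.
case: n => [|k].
  by rewrite !Scoef gbS gb0 expr1 expr0 mulr1n mulr0 subr0; field.
rewrite -[Sq k.+2 *+ _]mulr_natr -[Sq k.+1 *+ _]mulr_natr !Scoef (gbS _ k.+1) !exprS.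
set G := gbinom _ _; set P := (- 2%:R) ^+ k.
field; by rewrite addrC -natrD addn2 pnatr_eq0.
Qed.

Lemma uniqY (G : F) : Y * D G = - (G *+ 2) -> G 0%N = 0 -> G = 0.
Proof.
move=> H G0; apply: functional_extensionality => n; rewrite zeroE.
elim: n => [//|n IH].
have := congr1 (fun f : F => f n) H; rewrite /= Ymul oppE natmulE IH mul0rn oppr0 /D.
case: n IH => [|n] IH /=; rewrite ?IH ?mul0rn ?mulr0 ?subr0 => /eqP;
  by rewrite mulrn_eq0 => /orP[//|/eqP].
Qed.

Lemma Y0 : Y 0%N = 1.
Proof. by rewrite /Y addE oppE mul0E /fX /= mulr0 subr0. Qed.

Lemma DY : D Y = - 2%:R.
Proof.
apply: functional_extensionality => n.
rewrite /D oppE natmulE oneE.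
have := Ymul 1 n.+1; rewrite mulr1 => ->.
case: n => [|n]; rewrite !oneE /fconst /=.
  by rewrite mulr1n sub0r mulr1.
by rewrite mulr0 subr0 !mul0rn oppr0.
Qed.

Lemma S2 : Sq * Sq = Y.
Proof.
apply/eqP; rewrite -subr_eq0; apply/eqP; apply: uniqY.
  have e : Y * D (Sq * Sq - Y) = (Sq * (Y * D Sq)) *+ 2 - Y * D Y.
    rewrite DD DN DM; ring.
  by rewrite e DS_eq DY; ring.
by rewrite addE oppE mul0E S0 Y0 mulr1 subrr.
Qed.

Lemma SI : Sq * Iv = 1.
Proof. by apply: finvK; rewrite S0 oner_neq0. Qed.

Lemma DS_I : D Sq = - Iv.
Proof.
transitivity (D Sq * (Sq * Iv) * (Sq * Iv)); first by rewrite SI !mulr1.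
transitivity ((Y * D Sq) * Iv * Iv); first by rewrite -S2; ring.
rewrite DS_eq; transitivity (- (Sq * Iv) * Iv); first by ring.
by rewrite SI mulN1r.
Qed.

Lemma DI : D Iv = Iv * Iv * Iv.
Proof.
have h : Sq * D Iv = Iv * Iv.
  have := congr1 D SI; rewrite DM D1 DS_I => /eqP.
  by rewrite addrC addr_eq0 => /eqP ->; rewrite mulNr opprK.
transitivity (D Iv * (Sq * Iv)); first by rewrite SI mulr1.
by transitivity ((Sq * D Iv) * Iv); [ring | rewrite h].
Qed.

Definition Ex : F := fexp (fadd (fconst (-1)) sqrt1m2t).

Lemma DE : D Ex = - (Ex * Iv).
Proof.
have h0 : (fadd (fconst (-1)) sqrt1m2t) 0%N = 0.
  by rewrite /fadd /fconst /= -/Sq S0 addNr.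
rewrite /Ex /fexp Dfcomp //.
have -> : (fun k => (k.+1`!%:R)^-1 *+ k.+1) = (fun k => (k`!%:R)^-1 : rat).
  apply: functional_extensionality => k.
  have h1 : (k`!)%:R != 0 :> rat by rewrite pnatr_eq0 -lt0n fact_gt0.
  have h2 : (k.+1)%:R != 0 :> rat by rewrite pnatr_eq0.
  rewrite factS natrM -mulr_natr; field; by rewrite h1 addrC natr1 h2.
rewrite faddE DD Dconst add0r -/Sq DS_I; ring.
Qed.

Lemma E0 : Ex 0%N = 1.
Proof. by rewrite /Ex /fexp fcomp0 fact0 invr1. Qed.

Lemma I0 : Iv 0%N = 1.
Proof. by have := congr1 (fun f : F => f 0%N) SI; rewrite /= mul0E S0 mul1r. Qed.

Definition cf (k : nat) : F := fconst ((k`!)%:R^-1).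
Definition a (s : nat) : F := Ex * Iv * (cf s * (1 - Sq) ^+ s).

Lemma rhsE s : rhs s = a s.
Proof.
have h (f : F) : (fconst (-1) : F) * f = - f by rewrite fconstN fconst1 mulN1r.
by rewrite /rhs /a !fmulE fscaleE fpowE !faddE fscaleE h.
Qed.

Lemma cfS k : cf k = cf k.+1 *+ k.+1.
Proof.
apply: functional_extensionality => n; rewrite natmulE /cf /fconst.
case: (n == 0%N); last by rewrite mul0rn.
have h1 : (k`!)%:R != 0 :> rat by rewrite pnatr_eq0 -lt0n fact_gt0.
have h2 : (k.+1)%:R != 0 :> rat by rewrite pnatr_eq0.
rewrite factS natrM -mulr_natr; field; by rewrite h1 addrC natr1 h2.
Qed.

Lemma cf0 : cf 0 = 1.
Proof. by rewrite /cf fact0 invr1. Qed.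
Lemma cf1 : cf 1 = 1.
Proof. by rewrite /cf (_ : 1`! = 1)%N // invr1. Qed.
Lemma Dcf k : D (cf k) = 0.
Proof. exact: Dconst. Qed.

Lemma modSI (x y K : F) : x - y = (Sq * Iv - 1) * K -> x = y.
Proof. by rewrite SI subrr mul0r => /eqP; rewrite subr_eq0 => /eqP. Qed.

Lemma rec_alg s : Y * D (a s) + a s *+ s = (if s is t.+1 then a t else 0) + a s.+1 *+ s.+1.
Proof.
case: s => [|t].
  rewrite /a !expr0 expr1 cf0 cf1 !mulr1 mul1r mulr0n addr0 add0r mulr1n DM DE DI -S2.
  apply: (modSI (K := - Ex * (Sq * Iv) + Ex * Iv * (Sq * Iv + 1))); ring.
rewrite /a !DM Dcf DE DI DexpS DD DN D1 DS_I.
rewrite [cf t]cfS [cf t.+1]cfS !exprSr -S2.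
set Q := (1 - Sq) ^+ t; set C := cf t.+2.
apply: (modSI (K := - Ex * (Sq * Iv) * (C *+ t.+2) * Q * (1 - Sq)
   + Ex * Iv * (C *+ t.+2) * Q * (1 - Sq) * (Sq * Iv + 1)
   + Ex * (C *+ t.+2 *+ t.+1) * Q * (Sq * Iv))).
ring.
Qed.
Lemma rec_coef s n : a s n.+1 *+ n.+1 + a s n *+ s =
  (if s is t.+1 then a t n else 0) + a s.+1 n *+ s.+1 + a s n *+ n.*2.
Proof.
have := congr1 (fun f : F => f n) (rec_alg s).
rewrite /= !addE Ymul !natmulE /D.
have -> : (if n is n'.+1 then a s n'.+1 *+ n'.+1 else 0) = a s n *+ n.
  by case: n.
have -> : (if s is t.+1 then a t else 0) n = (if s is t.+1 then a t n else 0).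
  by case: s.
move=> e; rewrite -e -muln2 mulrnA; ring.
Qed.

Lemma egf_rec s n : egfL s n.+1 *+ n.+1 + egfL s n *+ s =
  (if s is t.+1 then egfL t n else 0) + egfL s.+1 n *+ s.+1 + egfL s n *+ n.*2.
Proof.
have h1 : (n`!)%:R != 0 :> rat by rewrite pnatr_eq0 -lt0n fact_gt0.
have h2 : (n.+1)%:R != 0 :> rat by rewrite pnatr_eq0.
have h3 : (1 + n%:R) != 0 :> rat by rewrite addrC natr1.
apply: (mulIf h1).
transitivity ((L n.+1 s + s * L n s)%N%:R : rat).
  rewrite /egfL factS natrD !natrM; field; by rewrite h1 h3.
rewrite L_rec; case: s => [|t].
  rewrite /egfL !natrD !natrM add0r; field; by rewrite h1.
rewrite /egfL !natrD !natrM; field; by rewrite h1.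
Qed.

Lemma natmul_inj (x y : rat) k : x *+ k.+1 = y *+ k.+1 -> x = y.
Proof.
move/eqP; rewrite -subr_eq0 -mulrnBl mulrn_eq0 /= subr_eq0 => /eqP.
by [].
Qed.

Theorem theorem2 : forall s : nat, egfL s = rhs s.
Proof.
move=> s; apply: functional_extensionality => n; rewrite rhsE.
elim: n s => [|n IH] s.
  rewrite /egfL L_cnt cnt0 fact0 divr1 /a !mul0E E0 I0 mul1r expr0E addE oppE S0.
  rewrite /cf /fconst /= subrr.
  by case: s => [|t]; rewrite ?expr0 ?fact0 ?invr1 ?mulr1 // expr0n mulr0.
have e1 := rec_coef s n; have e2 := egf_rec s n.
case: s e1 e2 => [|t] e1 e2 /=; rewrite !IH in e2.
  apply: (@natmul_inj _ _ n); apply: (addIr (a 0 n *+ 0)); by rewrite e1 e2.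
apply: (@natmul_inj _ _ n); apply: (addIr (a t.+1 n *+ t.+1)); by rewrite e1 e2.
Qed.
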